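(* Let $H=(V,E)$ be an unweighted hypergraph and consider the algorithm Estimation$(H)$: compute a number $k>0$ with $\gamma_H(e)\ge k$ for all $e\in E$; set $H_0=H$ and $i=1$; while $H_{i-1}$ has edges, let $F_i=\textsc{WeakEdges}(H_{i-1},2^ik)$, set $\gamma'(e)=2^{i-1}k$ for every $e\in F_i$, set $H_i=H_{i-1}-F_i$ and increase $i$ by one. Here $\textsc{WeakEdges}(G,t)$ is any procedure returning a set of edges of $G$ that contains all $t$-weak edges of $G$. Then: (1) for each $i$ and each $e\in F_i$, $\gamma_H(e)\ge 2^{i-1}k$; (2) for each $e\in E$ assigned a value $\gamma'(e)$ by the algorithm, $\gamma'(e)\le\gamma_H(e)$.
   Context: A hypergraph $H=(V,E)$ has edges that are subsets of $V$. For $U\subseteq V$, $H[U]=(U,\{e\in E:e\subseteq U\})$; for $A\subseteq V$, $\delta_H(A)$ is the set of edges meeting both $A$ and $V\setminus A$; $\lambda(H)=\min_{\emptyset\subsetneq A\subsetneq V}|\delta_H(A)|$. The strength of $e$ is $\gamma_H(e)=\max_{e\subseteq U\subseteq V}\lambda(H[U])$. An edge is $t$-weak in $G$ if its strength in $G$ is less than $t$. $H-F$ denotes deletion of the edge set $F$. *)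

(* Defs.v *)
From HB Require Import structures.
From mathcomp Require Import all_boot all_order all_algebra.
Set Implicit Arguments. Unset Strict Implicit. Unset Printing Implicit Defensive.
Import Order.TTheory GRing.Theory Num.Theory.

(* A hypergraph on vertex type V with edges indexed by a finite type E
   (parallel edges allowed); [ends e : {set V}] is the vertex set of edge e.
   A sub-hypergraph on the same vertex set is given by an edge set S : {set E}.
   Extended naturals are encoded as [option nat], [None] = +infinity
   (the value of a min over an empty range, e.g. lambda of a 1-vertex graph). *)

Definition omin (x y : option nat) : option nat :=
  match x, y with
  | None, _ => y
  | _, None => x
  | Some a, Some b => Some (minn a b)
  end.

Definition omax (x y : option nat) : option nat :=
  match x, y with
  | None, _ => None
  | _, None => None
  | Some a, Some b => Some (maxn a b)
  end.

Section Hyper.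
Variables (V E : finType) (ends : E -> {set V}).

Definition induced_edges (S : {set E}) (U : {set V}) : {set E} :=
  [set f in S | ends f \subset U].

Definition cut (S : {set E}) (U A : {set V}) : {set E} :=
  [set f in induced_edges S U |
     (ends f :&: A != set0) && (ends f :&: (U :\: A) != set0)].

Definition lambda (S : {set E}) (U : {set V}) : option nat :=
  \big[omin/None]_(A : {set V} | (A \subset U) && (A != set0) && (A != U))
     Some #|cut S U A|.

Definition strength (S : {set E}) (e : E) : option nat :=
  \big[omax/Some 0%N]_(U : {set V} | ends e \subset U) lambda S U.
End Hyper.

Definition oge {R : numDomainType} (x : option nat) (c : R) : bool :=
  if x is Some n then (c <= n%:R)%R else true.
Definition olt {R : numDomainType} (x : option nat) (t : R) : bool :=
  if x is Some n then (n%:R < t)%R else false.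

(* Main.v *)
Require Import Defs.
From HB Require Import structures.
From mathcomp Require Import all_boot all_order all_algebra.
Import Order.TTheory GRing.Theory Num.Theory.
Local Open Scope ring_scope.

Definition ole (x y : option nat) : bool :=
  match x, y with
  | _, None => true
  | None, Some _ => false
  | Some a, Some b => (a <= b)%N
  end.

Lemma omin_mono x1 x2 y1 y2 : ole x1 y1 -> ole x2 y2 -> ole (omin x1 x2) (omin y1 y2).
Proof.
case: x1 => [a|]; case: y1 => [b|]; case: x2 => [c|]; case: y2 => [d|] //=.
- move=> h1 h2; rewrite leq_min !geq_min h1 h2 orbT //.
- move=> h1 _; rewrite geq_min h1 //.
- move=> _ h2; rewrite geq_min h2 orbT //.
Qed.

Lemma omax_mono x1 x2 y1 y2 : ole x1 y1 -> ole x2 y2 -> ole (omax x1 x2) (omax y1 y2).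
Proof.
case: x1 => [a|]; case: y1 => [b|]; case: x2 => [c|]; case: y2 => [d|] //=.
move=> h1 h2; rewrite geq_max !leq_max h1 h2 orbT //.
Qed.

Lemma strength_mono (V E : finType) (ends : E -> {set V}) (S T : {set E}) e :
  S \subset T -> ole (strength ends S e) (strength ends T e).
Proof.
move=> ST; rewrite /strength.
apply: (big_ind2 (fun x y => ole x y)) => //=; [by move=> ????; apply: omax_mono|].
move=> U _; rewrite /lambda.
apply: (big_ind2 (fun x y => ole x y)) => //=; [by move=> ????; apply: omin_mono|].
move=> A _ /=; apply: subset_leq_card; apply/subsetP => f.
rewrite !inE => /andP[/andP[fS ->] ->]; rewrite (subsetP ST _ fS) //.
Qed.

Lemma oge_ole (R : realFieldType) x y (c : R) : oge x c -> ole x y -> oge y c.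
Proof.
case: x => [a|]; case: y => [b|] //= h hab.
apply: (le_trans h); rewrite ler_nat //.
Qed.

Lemma not_olt (R : realFieldType) x (c : R) : ~~ olt x c -> oge x c.
Proof. case: x => [a|] //=; rewrite -leNgt //. Qed.

Arguments oge_ole {R x y c}.
Arguments not_olt {R x c}.

Theorem lemma3p1 (R : realFieldType) (V E : finType) (ends : E -> {set V})
  (k : R) (Hs : nat -> {set E}) (F : nat -> {set E}) (gam' : E -> R) :
  0 < k ->
  (forall e : E, oge (strength ends [set: E] e) k) ->
  Hs 0%N = [set: E] ->
  (forall i : nat, (forall j, (j <= i)%N -> Hs j != set0) ->
     [/\ F i.+1 \subset Hs i,
         (forall e, e \in Hs i ->
            olt (strength ends (Hs i) e) (2 ^+ i.+1 * k) -> e \in F i.+1),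
         (forall e, e \in F i.+1 -> gam' e = 2 ^+ i * k)
       & Hs i.+1 = Hs i :\: F i.+1]) ->
  forall i : nat, (forall j, (j <= i)%N -> Hs j != set0) ->
  forall e : E, e \in F i.+1 ->
    oge (strength ends [set: E] e) (2 ^+ i * k) /\
    oge (strength ends [set: E] e) (gam' e).
Proof.
move=> k0 hk H0 step.
have claim : forall i, (forall j, (j <= i)%N -> Hs j != set0) ->
    forall e, e \in Hs i -> oge (strength ends [set: E] e) (2 ^+ i * k).
  elim=> [|i IH] ne e.
    by move=> _; rewrite expr0 mul1r.
  have ne' : forall j, (j <= i)%N -> Hs j != set0.
    by move=> j hj; apply: ne; apply: leq_trans hj _.
  have [_ hw _ hH] := step i ne'.
  rewrite hH inE => /andP[nF eH].
  have h1 : oge (strength ends (Hs i) e) (2 ^+ i.+1 * k).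
    apply: not_olt; apply/negP => hlt; by rewrite (hw e eH hlt) in nF.
  apply: (oge_ole h1); apply: strength_mono; exact: subsetT.
move=> i ne e eF.
have [sub _ hg _] := step i ne.
have h := claim i ne e (subsetP sub _ eF).
by rewrite hg.
Qed.
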